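(* Let $d\ge 2$, let $\mathcal{K}=\{k_1,\ldots,k_r\}\subset\{1,\ldots,d-1\}$ (with $k_1,\ldots,k_r$ distinct) and $t\in\mathbb{N}_0$ be such that $\min\{k_1,d-k_1\}\ge\min\{k_2,d-k_2\}\ge\cdots\ge\min\{k_r,d-k_r\}$. Then, with $s:=\min\{t+1,|\mathcal{K}|\}$, $$\dim\big(\mathrm{Pol}_t(\mathcal{G}_{\mathcal{K},d})\big)\ \ge\ \sum_{i=1}^{s}\dim\big(\mathrm{Pol}_{t-i+1}(\mathcal{G}_{k_i,d})\big).$$
   Context: $\mathbb{R}^{d\times d}_{\mathrm{sym}}$ denotes the real symmetric $d\times d$ matrices. For $1\le k\le d-1$, the Grassmannian is $\mathcal{G}_{k,d}=\{P\in\mathbb{R}^{d\times d}_{\mathrm{sym}}:P^2=P,\ \mathrm{Tr}(P)=k\}$, and for nonempty $\mathcal{K}\subset\{1,\ldots,d-1\}$, $\mathcal{G}_{\mathcal{K},d}=\bigcup_{k\in\mathcal{K}}\mathcal{G}_{k,d}$. $\mathrm{Pol}_t(\mathbb{R}^{d\times d}_{\mathrm{sym}})$ is the space of real polynomials of total degree at most $t$ in the matrix entries, and for a subset $M\subset\mathbb{R}^{d\times d}_{\mathrm{sym}}$ (such as $\mathcal{G}_{k,d}$ or $\mathcal{G}_{\mathcal{K},d}$), $\mathrm{Pol}_t(M)=\{f|_M: f\in\mathrm{Pol}_t(\mathbb{R}^{d\times d}_{\mathrm{sym}})\}$. *)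

(* Defs.v *)
(* Real numbers are modelled by an arbitrary real closed field R. *)
From HB Require Import structures.
From mathcomp Require Import all_boot all_order all_algebra.
From Stdlib Require Import ClassicalEpsilon.
Set Implicit Arguments. Unset Strict Implicit. Unset Printing Implicit Defensive.
Import Order.TTheory GRing.Theory Num.Theory.
Local Open Scope ring_scope.

Definition decP (P : Prop) : bool :=
  if excluded_middle_informative P then true else false.

Section Pol.
Variables (R : rcfType) (d : nat).

(* exponent vectors for monomials in the d*d matrix entries, each exponent <= t *)
Definition expo (t : nat) := {ffun 'I_d * 'I_d -> 'I_t.+1}.

Definition monom (t : nat) (e : expo t) (A : 'M[R]_d) : R :=
  \prod_(p : 'I_d * 'I_d) A p.1 p.2 ^+ (e p : nat).

Definition expo_deg (t : nat) (e : expo t) : nat := (\sum_(p : 'I_d * 'I_d) (e p : nat))%N.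

Definition is_pol (t : nat) (f : 'M[R]_d -> R) : Prop :=
  exists c : expo t -> R,
    forall A, f A = \sum_(e : expo t | (expo_deg e <= t)%N) c e * monom e A.

Definition indep_on (M : 'M[R]_d -> Prop) (t n : nat) (f : 'I_n -> 'M[R]_d -> R) : Prop :=
  (forall i, is_pol t (f i)) /\
  forall c : 'I_n -> R,
    (forall A, M A -> \sum_(i < n) c i * f i A = 0) -> forall i, c i = 0.

(* dim Pol_t(M): the maximal number of elements of Pol_t whose restrictions to M
   are linearly independent.  The bound (t+1)^(d*d) (>= number of monomials of
   degree <= t) is never binding. *)
Definition dimPol (M : 'M[R]_d -> Prop) (t : nat) : nat :=
  (\max_(n < (t.+1 ^ (d * d)).+1 | decP (exists f : 'I_n -> 'M[R]_d -> R, indep_on M t f)) (n : nat))%N.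

(* Grassmannian G_{k,d} inside the symmetric matrices *)
Definition Grass (k : nat) (P : 'M[R]_d) : Prop :=
  P^T = P /\ P *m P = P /\ \tr P = k%:R.

Definition GrassK (K : seq nat) (P : 'M[R]_d) : Prop :=
  exists2 k, k \in K & Grass k P.

End Pol.

(* Main.v *)
From Pilot Require Import Defs.
From HB Require Import structures.
From mathcomp Require Import all_boot all_order all_algebra.
From Stdlib Require Import ClassicalEpsilon.
Set Implicit Arguments. Unset Strict Implicit. Unset Printing Implicit Defensive.
Import Order.TTheory GRing.Theory Num.Theory.

Section Helpers.
Local Open Scope ring_scope.
Variables (R : rcfType) (d : nat).

Lemma is_pol_ext s (f g : 'M[R]_d -> R) :
  (forall A, f A = g A) -> is_pol s f -> is_pol s g.
Proof. by move=> fg [c hc]; exists c => A; rewrite -fg. Qed.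

Lemma is_pol_add s (f g : 'M[R]_d -> R) :
  is_pol s f -> is_pol s g -> is_pol s (fun A => f A + g A).
Proof.
move=> [c hc] [c' hc']; exists (fun e => c e + c' e) => A.
by rewrite hc hc' -big_split /=; apply: eq_bigr => e _; rewrite mulrDl.
Qed.

Lemma is_pol_scale s (f : 'M[R]_d -> R) a :
  is_pol s f -> is_pol s (fun A => a * f A).
Proof.
move=> [c hc]; exists (fun e => a * c e) => A.
by rewrite hc mulr_sumr; apply: eq_bigr => e _; rewrite mulrA.
Qed.

Lemma is_pol0 s : is_pol s (fun _ : 'M[R]_d => 0).
Proof. by exists (fun _ => 0) => A; rewrite big1 // => e _; rewrite mul0r. Qed.

Lemma is_pol_sum s n (F : 'I_n -> 'M[R]_d -> R) :
  (forall i, is_pol s (F i)) -> is_pol s (fun A => \sum_(i < n) F i A).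
Proof.
elim: n F => [|n IH] F hF.
  by apply: is_pol_ext (is_pol0 s) => A; rewrite big_ord0.
apply: is_pol_ext (is_pol_add (IH (fun i => F (widen_ord (leqnSn n) i)) _) (hF ord_max)).
  by move=> A; rewrite big_ord_recr.
by move=> i; apply: hF.
Qed.

Lemma is_pol_map s s' (phi : expo d s -> expo d s') (g : 'M[R]_d -> R) (f : 'M[R]_d -> R) :
  (forall e, (expo_deg e <= s)%N -> (expo_deg (phi e) <= s')%N) ->
  (forall e A, monom (phi e) A = g A * monom e A) ->
  is_pol s f -> is_pol s' (fun A => g A * f A).
Proof.
move=> hdeg hmon [c hc].
exists (fun e' => \sum_(e | (expo_deg e <= s)%N && (phi e == e')) c e) => A.
rewrite hc mulr_sumr.
under [RHS]eq_bigr do rewrite mulr_suml.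
rewrite -(exchange_big_dep (fun e : expo d s' => expo_deg e <= s')%N) /=; last first.
  by move=> e e' he /eqP <-; apply: hdeg.
apply: eq_bigr => e he.
rewrite (big_pred1 (phi e)); last first.
  by move=> e' /=; rewrite eq_sym.
by rewrite hmon mulrCA.
Qed.

Lemma is_pol_widen s (f : 'M[R]_d -> R) : is_pol s f -> is_pol s.+1 f.
Proof.
move=> h.
have := @is_pol_map s s.+1 (fun e => [ffun p => widen_ord (leqnSn _) (e p)])
  (fun _ => 1) f.
move=> H; apply: is_pol_ext (H _ _ h) => //.
- by move=> A; rewrite mul1r.
- move=> e he; apply: leq_trans (leqnSn _); apply: leq_trans he.
  by rewrite /expo_deg leq_eqVlt; apply/orP; left; apply/eqP; apply: eq_bigr => p _; rewrite ffunE.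
- move=> e A; rewrite mul1r /monom; apply: eq_bigr => p _; by rewrite ffunE.
Qed.

Lemma is_pol_entry s (i j : 'I_d) (f : 'M[R]_d -> R) :
  is_pol s f -> is_pol s.+1 (fun A : 'M[R]_d => A i j * f A).
Proof.
apply: (@is_pol_map s s.+1 (fun e => [ffun p => inord (e p + (p == (i, j)))])).
- move=> e he; rewrite /expo_deg.
  rewrite (eq_bigr (fun p => (e p + (p == (i,j)))%N)); last first.
    move=> p _; rewrite ffunE inordK //.
    by have := ltn_ord (e p); case: (p == (i, j)); rewrite /= ?addn0 ?addn1 // => /ltnW.
  have h1 : (\sum_(p : 'I_d * 'I_d) (p == (i, j)) = 1)%N.
    by rewrite (bigD1 (i, j)) //= ?eqxx big1 // => p /negbTE ->.
  by rewrite big_split /= h1 addn1.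
- move=> e A; rewrite /monom.
  rewrite (eq_bigr (fun p : 'I_d * 'I_d => A p.1 p.2 ^+ (e p : nat) * A p.1 p.2 ^+ (p == (i,j)))); last first.
    move=> p _; rewrite ffunE inordK ?exprD //.
    by have := ltn_ord (e p); case: (p == (i, j)); rewrite /= ?addn0 ?addn1 // => /ltnW.
  rewrite big_split /= mulrC; congr (_ * _).
  rewrite (bigD1 (i, j)) //= ?eqxx expr1 big1 ?mulr1 //.
  by move=> p /negbTE ->; rewrite expr0.
Qed.

Lemma is_pol_tr s k (f : 'M[R]_d -> R) :
  is_pol s f -> is_pol s.+1 (fun A : 'M[R]_d => (\tr A - k%:R) * f A).
Proof.
move=> h.
have h1 := is_pol_sum (fun m : 'I_d => is_pol_entry m m h).
have h2 := is_pol_scale (- k%:R) (is_pol_widen h).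
apply: is_pol_ext (is_pol_add h1 h2) => A.
by rewrite mulrBl /mxtrace mulr_suml mulNr.
Qed.

Lemma is_pol_q (kk : nat -> nat) j : forall s (f : 'M[R]_d -> R),
  is_pol s f ->
  is_pol (s + j) (fun A : 'M[R]_d => (\prod_(i < j) (\tr A - (kk i)%:R)) * f A).
Proof.
elim: j => [|j IH] s f h.
  by rewrite addn0; apply: is_pol_ext h => A; rewrite big_ord0 mul1r.
have := IH _ _ (is_pol_tr (kk j) h); rewrite addSnnS => H.
by apply: is_pol_ext H => A; rewrite big_ord_recr /= mulrA.
Qed.

End Helpers.

Section Indep.
Local Open Scope ring_scope.
Variables (R : rcfType) (d : nat).

Lemma indep_mono (M M' : 'M[R]_d -> Prop) t n (f : 'I_n -> 'M[R]_d -> R) :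
  (forall A, M A -> M' A) -> indep_on M t f -> indep_on M' t f.
Proof. by move=> hM [hp hi]; split=> // c hc; apply: hi => A /hM; apply: hc. Qed.

Lemma indep0 (M : 'M[R]_d -> Prop) t (f : 'I_0 -> 'M[R]_d -> R) : indep_on M t f.
Proof. by split=> [[]|c _ []]. Qed.

Lemma split_l a b (i : 'I_a) : split (lshift b i) = inl i.
Proof. exact: (unsplitK (inl i)). Qed.
Lemma split_r a b (i : 'I_b) : split (rshift a i) = inr i.
Proof. exact: (unsplitK (inr i)). Qed.

Lemma indep_cat (U V : 'M[R]_d -> Prop) t a b
  (F : 'I_a -> 'M[R]_d -> R) (G : 'I_b -> 'M[R]_d -> R) :
  indep_on U t F -> indep_on V t G -> (forall i A, U A -> G i A = 0) ->
  indep_on (fun A => U A \/ V A) t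
    (fun k : 'I_(a + b) => match split k with inl i => F i | inr i => G i end).
Proof.
move=> [hFp hF] [hGp hG] hGU; split.
  by move=> k; case: (split k).
move=> c hc.
have hsum : forall A, U A \/ V A ->
  \sum_(i < a) c (lshift b i) * F i A + \sum_(i < b) c (rshift a i) * G i A = 0.
  move=> A hA; rewrite -[RHS](hc A hA) big_split_ord /=.
  congr (_ + _); apply: eq_bigr => i _; by rewrite ?split_l ?split_r.
have cl : forall i, c (lshift b i) = 0.
  apply: hF => A hA; have := hsum A (or_introl hA).
  by rewrite [X in _ + X]big1 ?addr0 // => i _; rewrite hGU // mulr0.
have cr : forall i, c (rshift a i) = 0.
  apply: hG => A hA; have := hsum A (or_intror hA).
  by rewrite [X in X + _]big1 ?add0r // => i _; rewrite cl mul0r.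
move=> k; rewrite -(splitK k); case: (split k) => i /=; [exact: cl | exact: cr].
Qed.

Lemma card_expo t : #|{: expo d t}| = (t.+1 ^ (d * d))%N.
Proof. by rewrite card_ffun card_prod !card_ord. Qed.

Lemma indep_bound (M : 'M[R]_d -> Prop) t n (f : 'I_n -> 'M[R]_d -> R) :
  indep_on M t f -> (n <= t.+1 ^ (d * d))%N.
Proof.
move=> [hp hi].
have [c hc] := fin_all_exists hp.
rewrite -card_expo leqNgt; apply/negP => hlt.
pose C := \matrix_(i < n, j < #|{: expo d t}|)
  (if (expo_deg (enum_val j) <= t)%N then c i (enum_val j) else 0).
have hr : (0 < \rank (kermx C))%N.
  by rewrite mxrank_ker subn_gt0; apply: leq_ltn_trans (rank_leq_col C) hlt.
have : kermx C != 0 by rewrite -mxrank_eq0 -lt0n.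
case: (pickP (fun i => row i (kermx C) != 0)) => [i hi0 _ | h]; last first.
  move/eqP; apply; apply/row_matrixP => i; rewrite row0; apply/eqP.
  by have := h i; move/negbT; rewrite negbK.
move/negP: hi0; apply; apply/eqP.
set v := row i (kermx C).
have hv : v *m C = 0 by apply/sub_kermxP; exact: row_sub.
have hz : forall k, v 0 k = 0.
  apply: hi => A _.
  under eq_bigr do rewrite hc mulr_sumr.
  rewrite exchange_big /= big1 // => e he.

  have : (v *m C) 0 (enum_rank e) = 0 by rewrite hv mxE.
  rewrite mxE => H.
  rewrite (eq_bigr (fun k => (v 0 k * C k (enum_rank e)) * monom e A)).
    by rewrite -mulr_suml H mul0r.
  by move=> k _; rewrite /C [X in _ = _ * X * _]mxE enum_rankK he mulrA.
by apply/rowP => k; rewrite hz mxE.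
Qed.

End Indep.

Section Dim.
Local Open Scope ring_scope.
Variables (R : rcfType) (d : nat).

Lemma decPT (P : Prop) : P -> Pilot.Defs.decP P.
Proof. by move=> hP; rewrite /Pilot.Defs.decP; case: (excluded_middle_informative P). Qed.

Lemma decP_P (P : Prop) : Pilot.Defs.decP P -> P.
Proof. by rewrite /Pilot.Defs.decP; case: (excluded_middle_informative P). Qed.

Lemma dimPol_wit (M : 'M[R]_d -> Prop) t :
  exists f : 'I_(dimPol M t) -> 'M[R]_d -> R, indep_on M t f.
Proof.
rewrite /dimPol.
set B := (t.+1 ^ (d * d)).+1.
rewrite (bigop.bigmax_eq_arg (ord0 : 'I_B)); last first.
  by apply: decPT; exists (fun i : 'I_0 => fun _ => 0); apply: indep0.
case: arg_maxnP => [|i hi _].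
  by apply: decPT; exists (fun i : 'I_0 => fun _ => 0); apply: indep0.
exact: decP_P hi.
Qed.

Lemma dimPol_ge (M : 'M[R]_d -> Prop) t n (f : 'I_n -> 'M[R]_d -> R) :
  indep_on M t f -> (n <= dimPol M t)%N.
Proof.
move=> h; have hn := indep_bound h.
rewrite /dimPol.
have hn' : (n < (t.+1 ^ (d * d)).+1)%N by [].
apply: (@bigop.leq_bigmax_cond _ _ (fun i : 'I_(t.+1 ^ (d * d)).+1 => (i : nat)) (Ordinal hn')).
by apply: decPT; exists f.
Qed.

End Dim.

Theorem mainTheorem5 (R : rcfType) (d : nat) (ks : seq nat) (t : nat) :
  (2 <= d)%N ->
  (0 < size ks)%N ->
  uniq ks ->
  all (fun k => (1 <= k) && (k <= d - 1)) ks ->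
  sorted (fun a b => minn b (d - b) <= minn a (d - a))%N ks ->
  (\sum_(i < minn t.+1 (size ks))
      dimPol (@Grass R d (nth 0%N ks i)) (t - i)
   <= dimPol (@GrassK R d ks) t)%N.
Proof.
move=> _ _ huniq _ _.
set s := minn t.+1 (size ks).
pose nn := fun i : nat => dimPol (@Grass R d (nth 0%N ks i)) (t - i).
pose U := fun (j : nat) (A : 'M[R]_d) => exists2 i, (i < j)%N & Grass (nth 0%N ks i) A.
have key : forall j, (j <= s)%N -> exists N, N = (\sum_(i < j) nn i)%N /\
    exists f : 'I_N -> 'M[R]_d -> R, indep_on (U j) t f.
  elim => [_|j IH hj].
    exists 0%N; rewrite big_ord0; split=> //.
    by exists (fun i : 'I_0 => fun _ => 0%R); apply: indep0.
  have [N [-> [F hF]]] := IH (ltnW hj).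
  have hjt : (j <= t)%N by have := leq_trans hj (geq_minl _ _).
  have hjs : (j < size ks)%N by have := leq_trans hj (geq_minr _ _).
  have [Fj hFj] := dimPol_wit (@Grass R d (nth 0%N ks j)) (t - j).
  pose q := fun A : 'M[R]_d => (\prod_(i < j) (mxtrace A - (nth 0%N ks i)%:R))%R.
  pose G := fun i A => (q A * Fj i A)%R.
  have hG : indep_on (@Grass R d (nth 0%N ks j)) t G.
    split.
      move=> i; have := is_pol_q (fun i => nth 0%N ks i) j (hFj.1 i).
      by rewrite subnK.
    move=> c hc; apply: hFj.2 => A hA.
    have hq : (q A != 0)%R.
      apply/prodf_neq0 => i _; rewrite hA.2.2 subr_eq0 eqr_nat.
      rewrite nth_uniq //; last by apply: ltn_trans hjs.
      by rewrite neq_ltn ltn_ord orbT.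
    have := hc A hA; rewrite /G.
    under eq_bigr do rewrite mulrCA.
    by rewrite -mulr_sumr => /eqP; rewrite mulf_eq0 (negbTE hq) /= => /eqP.
  have hGU : forall i A, U j A -> G i A = 0%R.
    move=> i A [i0 hi0 hA]; rewrite /G /q (bigD1 (Ordinal hi0)) //= hA.2.2.
    by rewrite subrr !mul0r.
  exists ((\sum_(i < j) nn i) + nn j)%N; split; first by rewrite big_ord_recr.
  eexists; apply: indep_mono (indep_cat hF hG hGU).
  move=> A [[i hi hA]|hA].
    by exists i => //; apply: ltn_trans hi _.
  by exists j.
have [N [hN [f hf]]] := key s (leqnn s).
have -> : (\sum_(i < s) dimPol (@Grass R d (nth 0%N ks i)) (t - i))%N = N by rewrite hN.
apply: dimPol_ge (indep_mono _ hf).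
move=> A [i hi hA]; exists (nth 0%N ks i) => //.
by apply: mem_nth; apply: leq_trans hi (geq_minr _ _).
Qed.
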